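(* Let $d\ge 0$ be an integer and $r,s\in(-1,\infty)$ with $r\neq0$ and $r+s=0$. Let $\alpha=-d-1$, $\beta=r$, $\gamma=\frac{r-d-1}{2}$, $\delta=-\frac{r+d}{2}-1$ (so $N=d$), and for $0\le i\le d$ let $R_i(y)$ be the Racah polynomial $$R_i(y)=\sum_{k=0}^{i}\frac{(-i)_k(i+\alpha+\beta+1)_k}{(\alpha+1)_k(\beta+\delta+1)_k(\gamma+1)_k\,k!}\prod_{l=0}^{k-1}\bigl(l(l+\gamma+\delta+1)-y\bigr).$$ Then: (a) for every $0\le i\le d$, $u_i(4y+d(d+1))=R_i(y)$ as polynomials in $y$; (b) for $0\le j\le d$ the points $\bar\theta_j:=4j(j+\gamma+\delta+1)+d(d+1)=(d-2j)(d-2j+1)$ satisfy $\bar\theta_j=\theta_{2j}$ if $0\le j\le\lfloor d/2\rfloor$ and $\bar\theta_j=\theta_{2(d-j)+1}$ if $\lfloor d/2\rfloor<j\le d$, so $\{\bar\theta_j\}_{j=0}^d=\{\theta_j\}_{j=0}^d$; (c) the Racah weights $\bar k^*_j$ satisfy $\bar k^*_j=k^*_{2j}$ if $0\le j\le\lfloor d/2\rfloor$ and $\bar k^*_j=k^*_{2(d-j)+1}$ if $\lfloor d/2\rfloor<j\le d$. In other words, the dual Hahn polynomials $u_0,\dots,u_d$ are also Racah polynomials, orthogonal on the same points $\theta_0,\dots,\theta_d$ with the same weights $k^*_0,\dots,k^*_d$.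
   Context: Write $(x)_i=x(x+1)\cdots(x+i-1)$, $(x)_0=1$, and ${}_3F_2\left(\genfrac..{0pt}{}{a_1,a_2,a_3}{b_1,b_2}\,\middle|\,1\right)=\sum_{n\ge0}\frac{(a_1)_n(a_2)_n(a_3)_n}{(b_1)_n(b_2)_n n!}$ (a terminating sum here). For $0\le i\le d$ put $\theta_i=(d-i)(d-i+r+s+1)$ (these are distinct). Let $u_0,\dots,u_d$ be the unique real polynomials of degree at most $d$ with $u_i(\theta_j)={}_3F_2\left(\genfrac..{0pt}{}{-i,-j,j-r-s-2d-1}{-s-d,-d}\,\middle|\,1\right)$ for $0\le i,j\le d$ (the dual Hahn polynomials). Put $b^*_i=\frac{(d-i)(i-d-s)(2d-2i+r+s+2)_i}{(2d-2i+r+s)_{i+1}}$ ($0\le i\le d-1$), $c^*_i=\frac{i(i-d-r-1)(d-i+r+s+1)_{d-i}}{(d-i+r+s+2)_{d-i+1}}$ ($1\le i\le d$), and $k^*_i=\frac{b^*_0\cdots b^*_{i-1}}{c^*_1\cdots c^*_i}$ ($0\le i\le d$); the $u_i$ are orthogonal with respect to $\langle f,g\rangle=\sum_h f(\theta_h)g(\theta_h)k^*_h$. The Racah weights are defined by $\bar b^*_i=\frac{(d-i)(2d-2i+1)(d-2i-r-1)(d-2i-r)}{2(2d-4i-1)(2d-4i+1)}$ ($0\le i\le d-1$), $\bar c^*_i=\frac{i(2i-1)(d-2i+r+1)(d-2i+r+2)}{2(2d-4i+1)(2d-4i+3)}$ ($1\le i\le d$), and $\bar k^*_j=\frac{\bar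 b^*_0\cdots\bar b^*_{j-1}}{\bar c^*_1\cdots\bar c^*_j}$ ($0\le j\le d$). *)

(* Defs.v *)
From HB Require Import structures.
From mathcomp Require Import all_boot all_order all_algebra.
From mathcomp Require Import reals.
Set Implicit Arguments. Unset Strict Implicit. Unset Printing Implicit Defensive.
Import Order.TTheory GRing.Theory Num.Theory.
Local Open Scope ring_scope.

Section Defs.
Variable R : realType.

Definition rfact (x : R) (n : nat) : R := \prod_(k < n) (x + k%:R).

Definition theta (d : nat) (r s : R) (i : nat) : R :=
  (d%:R - i%:R) * (d%:R - i%:R + r + s + 1).

(* the terminating 3F2(-i,-j,j-r-s-2d-1; -s-d,-d; 1); terms with n > i vanish *)
Definition dualHahnF (d : nat) (r s : R) (i j : nat) : R :=
  \sum_(n < i.+1)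
    (rfact (- i%:R) n * rfact (- j%:R) n * rfact (j%:R - r - s - 2 * d%:R - 1) n)
    / (rfact (- s - d%:R) n * rfact (- d%:R) n * (n`!)%:R).

Definition bstar (d : nat) (r s : R) (i : nat) : R :=
  (d%:R - i%:R) * (i%:R - d%:R - s) * rfact (2 * d%:R - 2 * i%:R + r + s + 2) i
  / rfact (2 * d%:R - 2 * i%:R + r + s) i.+1.

Definition cstar (d : nat) (r s : R) (i : nat) : R :=
  i%:R * (i%:R - d%:R - r - 1) * rfact (d%:R - i%:R + r + s + 1) (d - i)
  / rfact (d%:R - i%:R + r + s + 2) (d - i).+1.

Definition kstar (d : nat) (r s : R) (i : nat) : R :=
  (\prod_(m < i) bstar d r s m) / (\prod_(m < i) cstar d r s m.+1).

Definition bbar (d : nat) (r : R) (i : nat) : R :=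
  (d%:R - i%:R) * (2 * d%:R - 2 * i%:R + 1) * (d%:R - 2 * i%:R - r - 1) * (d%:R - 2 * i%:R - r)
  / (2 * (2 * d%:R - 4 * i%:R - 1) * (2 * d%:R - 4 * i%:R + 1)).

Definition cbar (d : nat) (r : R) (i : nat) : R :=
  i%:R * (2 * i%:R - 1) * (d%:R - 2 * i%:R + r + 1) * (d%:R - 2 * i%:R + r + 2)
  / (2 * (2 * d%:R - 4 * i%:R + 1) * (2 * d%:R - 4 * i%:R + 3)).

Definition kbar (d : nat) (r : R) (j : nat) : R :=
  (\prod_(m < j) bbar d r m) / (\prod_(m < j) cbar d r m.+1).

Definition racahPoly (al be ga de : R) (i : nat) : {poly R} :=
  \sum_(k < i.+1)
    ((rfact (- i%:R) k * rfact (i%:R + al + be + 1) k)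
      / (rfact (al + 1) k * rfact (be + de + 1) k * rfact (ga + 1) k * (k`!)%:R))
    *: \prod_(l < k) ((l%:R * (l%:R + ga + de + 1))%:P - 'X).

End Defs.

(* Main.v *)
Require Import Defs.
From HB Require Import structures.
From mathcomp Require Import all_boot all_order all_algebra.
From mathcomp Require Import reals.
From mathcomp Require Import ring lra zify.
Import Order.TTheory GRing.Theory Num.Theory.
Local Open Scope ring_scope.

Set Implicit Arguments. Unset Strict Implicit. Unset Printing Implicit Defensive.


Section Gen.
Variable R : realType.

Lemma rfact0 (x : R) : rfact x 0 = 1.
Proof. by rewrite /rfact big_ord0. Qed.

Lemma rfactS (x : R) n : rfact x n.+1 = rfact x n * (x + n%:R).
Proof. by rewrite /rfact big_ord_recr. Qed.

Lemma rfactSl (x : R) n : rfact x n.+1 = x * rfact (x + 1) n.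
Proof.
rewrite /rfact big_ord_recl addr0; congr (_ * _); apply: eq_bigr => k _.
by rewrite /bump /= natrD -addrA.
Qed.

Lemma rfact_eq0 (x : R) k n : (k < n)%N -> x + k%:R = 0 -> rfact x n = 0.
Proof.
move=> hk hx; rewrite /rfact (bigD1 (Ordinal hk)) //=; rewrite hx mul0r //.
Qed.

Lemma rfact_neg_eq0 (i n : nat) : (i < n)%N -> rfact (- i%:R : R) n = 0.
Proof. by move=> h; apply: (@rfact_eq0 _ i n h); rewrite addrC subrr. Qed.

Lemma rfact_gt0 (x : R) n : 0 < x -> 0 < rfact x n.
Proof.
move=> hx; apply: prodr_gt0 => k _; apply: (lt_le_trans hx).
by rewrite lerDl ler0n.
Qed.

Lemma rfact_neq0 (x : R) n : (forall k, (k < n)%N -> x + k%:R != 0) -> rfact x n != 0.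
Proof.
move=> h; rewrite /rfact; apply/prodf_neq0 => k _; exact: h.
Qed.

Definition G (nu : nat -> R) (ka y : R) (n : nat) := \prod_(k < n) (nu k - ka * y).
Definition Fs (a : nat -> R) nu ka y M := \sum_(n < M.+1) a n * G nu ka y n.

Lemma GS nu ka y n : G nu ka y n.+1 = G nu ka y n * (nu n - ka * y).
Proof. by rewrite /G big_ord_recr. Qed.

Definition prev (a : nat -> R) (n : nat) := if n is n'.+1 then a n' else 0.

Lemma rec_gen (a0 a1 a2 nu : nat -> R) ka y M A C :
  a1 M = 0 ->
  (forall n, (n <= M)%N -> prev a1 n - nu n * a1 n
                           = - (A * a2 n - (A + C) * a1 n + C * a0 n)) ->
  ka * y * Fs a1 nu ka y M = A * Fs a2 nu ka y M - (A + C) * Fs a1 nu ka y M + C * Fs a0 nu ka y M.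
Proof.
move=> hM hc; rewrite /Fs !mulr_sumr -!sumrB -big_split /=.
have e1 : \sum_(n < M.+1) ka * y * (a1 n * G nu ka y n)
   = \sum_(n < M.+1) (nu n * a1 n * G nu ka y n - a1 n * G nu ka y n.+1).
  by apply: eq_bigr => n _; rewrite GS; ring.
have e2 : \sum_(n < M.+1) (A * (a2 n * G nu ka y n) - (A + C) * (a1 n * G nu ka y n) + C * (a0 n * G nu ka y n))
   = \sum_(n < M.+1) (nu n * a1 n * G nu ka y n - prev a1 n * G nu ka y n).
  apply: eq_bigr => -[n hn] _ /=; have := hc n hn.
  move=> h; have -> : nu n * a1 n = prev a1 n + (A * a2 n - (A + C) * a1 n + C * a0 n).
    by transitivity (prev a1 n - (prev a1 n - nu n * a1 n)); [ring | rewrite h; ring].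
  ring.
rewrite e1 e2 !sumrB; congr (_ - _).
rewrite big_ord_recr big_ord_recl /= hM mul0r addr0 mul0r add0r.
by apply: eq_bigr.
Qed.

End Gen.


Lemma ltn_R (R : realType) (k n : nat) : (k < n)%N -> k%:R + 1 <= n%:R :> R.
Proof. by move=> h; rewrite natr1 ler_nat. Qed.

Lemma leq_R (R : realType) (k n : nat) : (k <= n)%N -> k%:R <= n%:R :> R.
Proof. by move=> h; rewrite ler_nat. Qed.

Section DH.
Variables (R : realType) (d : nat) (r : R).
Hypotheses (hr1 : -1 < r) (hr2 : r < 1) (hr0 : r != 0).

Definition aH (i n : nat) : R :=
  rfact (- i%:R) n / (rfact (r - d%:R) n * rfact (- d%:R) n * (n`!)%:R).
Definition nuH (n : nat) : R := n%:R * (n%:R - 2 * d%:R - 1).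
Definition AH (i : nat) : R := (i%:R + r - d%:R) * (i%:R - d%:R).
Definition CH (i : nat) : R := i%:R * (i%:R + r).

Lemma aH0 i : aH i 0 = 1.
Proof. by rewrite /aH !rfact0 fact0 !mul1r invr1. Qed.

Lemma aH_top i : aH i d.+1 = 0.
Proof.
rewrite /aH (@rfact_eq0 _ (- d%:R) d d.+1) // ?mulr0 ?mul0r ?invr0 ?mulr0 //.
by rewrite addrC subrr.
Qed.

Lemma coefH i n : (i < d)%N -> (n <= d.+1)%N ->
  prev (aH i) n - nuH n * aH i n
  = - (AH i * aH i.+1 n - (AH i + CH i) * aH i n + CH i * aH i.-1 n).
Proof.
move=> hi hn; have hr1' := hr1; have hr2' := hr2; case: n hn => [|m] hm.
  rewrite /= !aH0 /nuH; ring.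
rewrite /=.
case: (ltnP m d) => hmd; last first.
  have -> : m = d by apply/eqP; rewrite eqn_leq hmd -ltnS hm.
  rewrite !aH_top /aH rfact_neg_eq0 // !mul0r !mulr0; ring.
have hk := ltn_R R hmd.
have hm0 := ler0n R m.
have hd0 : 0 < d%:R :> R by rewrite ltr0n (leq_ltn_trans _ hmd).
case: i hi => [|i'] hi.
  case: m hm hmd hk hm0 => [|m'] hm hmd hk hm0.
    rewrite /aH /AH /CH /nuH (rfact_neg_eq0 R (ltn0Sn 0)) !rfactS !rfact0 /=.
    rewrite !mul0r mul1r fact0.
    have nz1 : r - d%:R + 0%:R != 0 by apply/eqP => ?; lra.
    have nz2 : - d%:R + 0%:R != 0 :> R by apply/eqP => ?; lra.
    rewrite factS fact0 muln1. field. by apply/andP; split; apply/eqP => ?; lra.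
  rewrite /aH (rfact_neg_eq0 R (ltn0Sn m')) (rfact_neg_eq0 R (ltn0Sn m'.+1)).
  rewrite (rfactSl (-1)) (@rfact_eq0 _ (-1 + 1) 0 m'.+1) //; last by rewrite addNr addr0.
  rewrite !mul0r !mulr0; ring.
have nz1 : rfact (r - d%:R) m != 0.
  apply: rfact_neq0 => k hk'; have := ltn_R R (ltn_trans hk' hmd); have := ler0n R k.
  by move=> ? ?; apply/eqP => ?; lra.
have nz2 : rfact (- d%:R : R) m != 0.
  apply: rfact_neq0 => k hk'; have := ltn_R R (ltn_trans hk' hmd); have := ler0n R k.
  by move=> ? ?; apply/eqP => ?; lra.
have nz3 : (m`!)%:R != 0 :> R by rewrite pnatr_eq0 -lt0n fact_gt0.
have nzi : - (i'.+1)%:R != 0 :> R by rewrite oppr_eq0 pnatr_eq0.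
have E1 : rfact (- (i'.+2)%:R : R) m.+1 = - (i'.+2)%:R * rfact (- (i'.+1)%:R) m.
  by rewrite rfactSl; congr (_ * rfact _ _); rewrite -natr1; ring.
have E2 : rfact (- i'%:R : R) m.+1 = rfact (- (i'.+1)%:R) m * ((- (i'.+1)%:R + m%:R) * (- (i'.+1)%:R + m%:R + 1)) / (- (i'.+1)%:R).
  have h1 : rfact (-(i'.+1)%:R : R) m.+2 = - (i'.+1)%:R * rfact (- i'%:R) m.+1.
    by rewrite rfactSl; congr (_ * rfact _ _); rewrite -natr1; ring.
  have h2 : rfact (-(i'.+1)%:R : R) m.+2 = rfact (-(i'.+1)%:R) m * ((- (i'.+1)%:R + m%:R) * (- (i'.+1)%:R + m%:R + 1)).
    by rewrite !rfactS -natr1; ring.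
  apply: (mulfI nzi); rewrite -h1 h2; field; by rewrite addrC natr1 pnatr_eq0.
rewrite /aH /= E1 E2 !rfactS factS natrM.
move: nz3 nz1 nz2; set F := (m`!)%:R; set Y := rfact (r - _) m; set Z := rfact (- d%:R) m; set X := rfact _ m; move=> nz3 nz1 nz2.
rewrite /AH /CH /nuH -!natr1.
have hi0 := ler0n R i'.
field.
repeat (apply/andP; split); try (by []); try (by rewrite pnatr_eq0 -lt0n fact_gt0); apply/eqP => ?; lra.
Qed.

End DH.


Ltac nz := repeat (apply/andP; split); try (by []);
  try (by rewrite pnatr_eq0 -lt0n fact_gt0);
  try (match goal with H : is_true (_ != 0) |- _ => exact H end); apply/eqP => HH;
  first [ lra | match goal with H : is_true (_ != 0) |- _ => move/eqP: H; apply; lra end ].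

Section RA.
Variables (R : realType) (d : nat) (r : R).
Hypotheses (hr1 : -1 < r) (hr2 : r < 1) (hr0 : r != 0).

Lemma rnint (p q : nat) : r + p%:R - q%:R != 0.
Proof.
have hr1' := hr1; have hr2' := hr2.
case: (leqP p q) => h.
  have -> : r + p%:R - q%:R = r - (q - p)%:R by rewrite natrB //; ring.
  case: (q - p)%N => [|k]; first by rewrite subr0.
  have := ler0n R k; rewrite -natr1 => ?; apply/eqP => ?; lra.
have -> : r + p%:R - q%:R = r + (p - q)%:R by rewrite natrB 1?ltnW //; ring.
case: (p - q)%N => [|k]; first by rewrite addr0.
have := ler0n R k; rewrite -natr1 => ?; apply/eqP => ?; lra.
Qed.

Definition al : R := - d%:R - 1.
Definition be : R := r.
Definition ga : R := (r - d%:R - 1) / 2.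
Definition de : R := - ((r + d%:R) / 2) - 1.

Definition aR (i n : nat) : R :=
  (rfact (- i%:R) n * rfact (i%:R + al + be + 1) n)
  / (rfact (al + 1) n * rfact (be + de + 1) n * rfact (ga + 1) n * (n`!)%:R).
Definition nuR (n : nat) : R := n%:R * (n%:R + ga + de + 1).
Definition AR (i : nat) : R := AH d r i / 4.
Definition CR (i : nat) : R := CH r i / 4.

Lemma aR0 i : aR i 0 = 1.
Proof. by rewrite /aR !rfact0 fact0 !mul1r invr1. Qed.

Lemma aR_top i : aR i d.+1 = 0.
Proof.
rewrite /aR (@rfact_eq0 _ (al + 1) d d.+1) // ?mulr0 ?mul0r ?invr0 ?mulr0 //.
by rewrite /al; ring.
Qed.

Lemma nz_bd (k : nat) : be + de + 1 + k%:R != 0.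
Proof.
have := rnint (2 * k) d; rewrite natrM => h; apply/eqP => H; move/eqP: h; apply.
by rewrite /be /de in H; lra.
Qed.

Lemma nz_g (k : nat) : ga + 1 + k%:R != 0.
Proof.
have := rnint (2 * k + 1) d; rewrite natrD natrM => h; apply/eqP => H; move/eqP: h; apply.
by rewrite /ga in H; lra.
Qed.

Lemma coefR i n : (i < d)%N -> (n <= d.+1)%N ->
  prev (aR i) n - nuR n * aR i n
  = - (AR i * aR i.+1 n - (AR i + CR i) * aR i n + CR i * aR i.-1 n).
Proof.
move=> hi hn; have hr1' := hr1; have hr2' := hr2; case: n hn => [|m] hm.
  rewrite /= !aR0 /nuR; ring.
rewrite /=.
case: (ltnP m d) => hmd; last first.
  have -> : m = d by apply/eqP; rewrite eqn_leq hmd -ltnS hm.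
  rewrite !aR_top /aR rfact_neg_eq0 // !mul0r !mulr0; ring.
have hk := ltn_R R hmd.
have hm0 := ler0n R m.
have hd0 : 0 < d%:R :> R by rewrite ltr0n (leq_ltn_trans _ hmd).
case: i hi => [|i'] hi.
  case: m hm hmd hk hm0 => [|m'] hm hmd hk hm0.
    rewrite /aR /AR /CR /AH /CH /nuR (rfact_neg_eq0 R (ltn0Sn 0)) !rfactS !rfact0 /=.
    rewrite !mul0r ?mul1r fact0 factS fact0 muln1.
    have := nz_bd 0; have := nz_g 0; have := rnint 1 d.
    rewrite /al /be /de /ga => h1 h2 h3.
    field; nz.
  rewrite /aR (rfact_neg_eq0 R (ltn0Sn m')) (rfact_neg_eq0 R (ltn0Sn m'.+1)).
  rewrite (rfactSl (-1)) (@rfact_eq0 _ (-1 + 1) 0 m'.+1) //; last by rewrite addNr addr0.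
  rewrite !mul0r !mulr0; ring.
have nzP1 : rfact (al + 1) m != 0.
  apply: rfact_neq0 => k hk'; have := ltn_R R (ltn_trans hk' hmd); have := ler0n R k.
  by rewrite /al => ? ?; apply/eqP => ?; lra.
have nzP2 : rfact (be + de + 1) m != 0 by apply: rfact_neq0 => k _; apply: nz_bd.
have nzP3 : rfact (ga + 1) m != 0 by apply: rfact_neq0 => k _; apply: nz_g.
have nz3 : (m`!)%:R != 0 :> R by rewrite pnatr_eq0 -lt0n fact_gt0.
have nzi : - (i'.+1)%:R != 0 :> R by rewrite oppr_eq0 pnatr_eq0.
have hi1 := ltn_R R hi.
have hi0 := ler0n R i'.
set b := (i'.+1)%:R + al + be + 1.
have nzb : b != 0 by rewrite /b /al /be; apply/eqP => ?; lra.
have E1 : rfact (- (i'.+2)%:R : R) m.+1 = - (i'.+2)%:R * rfact (- (i'.+1)%:R) m.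
  by rewrite rfactSl; congr (_ * rfact _ _); rewrite -!natr1; ring.
have E2 : rfact (- i'%:R : R) m.+1 = rfact (- (i'.+1)%:R) m * ((- (i'.+1)%:R + m%:R) * (- (i'.+1)%:R + m%:R + 1)) / (- (i'.+1)%:R).
  have h1 : rfact (-(i'.+1)%:R : R) m.+2 = - (i'.+1)%:R * rfact (- i'%:R) m.+1.
    by rewrite rfactSl; congr (_ * rfact _ _); rewrite -!natr1; ring.
  have h2 : rfact (-(i'.+1)%:R : R) m.+2 = rfact (-(i'.+1)%:R) m * ((- (i'.+1)%:R + m%:R) * (- (i'.+1)%:R + m%:R + 1)).
    by rewrite !rfactS -!natr1; ring.
  apply: (mulfI nzi); rewrite -h1 h2; field; by rewrite addrC natr1 pnatr_eq0.
have E3 : rfact ((i'.+2)%:R + al + be + 1) m.+1 = rfact b m * ((b + m%:R) * (b + m%:R + 1)) / b.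
  have h1 : rfact b m.+2 = b * rfact ((i'.+2)%:R + al + be + 1) m.+1.
    by rewrite rfactSl; congr (_ * rfact _ _); rewrite /b -!natr1; ring.
  have h2 : rfact b m.+2 = rfact b m * ((b + m%:R) * (b + m%:R + 1)).
    by rewrite !rfactS -!natr1; ring.
  apply: (mulfI nzb); rewrite -h1 h2; field; exact: nzb.
have E4 : rfact (i'%:R + al + be + 1) m.+1 = (b - 1) * rfact b m.
  rewrite rfactSl; congr (_ * rfact _ _); rewrite /b -!natr1; ring.
rewrite /aR /= E1 E2 E3 E4 !rfactS factS natrM.
move: nz3 nzP1 nzP2 nzP3 nzb.
set F := (m`!)%:R; set Y := rfact b m; set P1 := rfact (al + 1) m; set P2 := rfact (be + de + 1) m.
set P3 := rfact (ga + 1) m; set X := rfact (- _) m.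
move=> nz3 nzP1 nzP2 nzP3 nzb.
move: hi1; rewrite -!natr1 => hi1.
rewrite /AR /CR /AH /CH /nuR /b -!natr1 /al /be /ga /de.
have := nz_bd m; have := nz_g m; rewrite /al /be /ga /de => h1 h2.
field; nz.
Qed.

End RA.


Section Main.
Variables (R : realType) (d : nat) (r : R).
Hypotheses (hr1 : -1 < r) (hr2 : r < 1) (hr0 : r != 0).

Lemma Fs_zero (a : nat -> R) nu ka y M : a 0%N = 1 -> (forall n, a n.+1 = 0) -> Fs a nu ka y M = 1.
Proof.
move=> h0 hS; rewrite /Fs big_ord_recl big1 ?addr0 /=.
  by rewrite h0 /G big_ord0 mulr1.
by move=> k _; rewrite /bump /= add1n hS mul0r.
Qed.

Lemma FH_FR i : (i <= d)%N -> forall y,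
  Fs (aH d r i) (nuH R d) 4 y d.+1 = Fs (aR d r i) (nuR d r) 1 y d.+1.
Proof.
have hr1' := hr1; have hr2' := hr2.
elim/ltn_ind: i => i IH hi y.
case: i IH hi => [|i] IH hi.
  rewrite !Fs_zero ?aH0 ?aR0 // => n.
    by rewrite /aR rfact_neg_eq0 // !mul0r.
  by rewrite /aH rfact_neg_eq0 // !mul0r.
have hid : (i < d)%N by [].
have recH := rec_gen 4 y (aH_top d r i) (fun n hn => coefH hr1 hr2 hid hn).
have recR := rec_gen 1 y (aR_top d r i) (fun n hn => coefR hr1 hr2 hr0 hid hn).
have IH1 := IH i (ltnSn i) (ltnW hi) y.
have IH2 := IH i.-1 (leq_ltn_trans (leq_pred i) (ltnSn i)) (leq_trans (leq_pred i) (ltnW hi)) y.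
have nzA : AH d r i != 0.
  have := ltn_R R hid; have := ler0n R i => ? ?.
  by rewrite /AH mulf_neq0 //; apply/eqP => ?; lra.
apply: (mulfI nzA).
have eH : AH d r i * Fs (aH d r i.+1) (nuH R d) 4 y d.+1
  = 4 * y * Fs (aH d r i) (nuH R d) 4 y d.+1 + (AH d r i + CH r i) * Fs (aH d r i) (nuH R d) 4 y d.+1
    - CH r i * Fs (aH d r i.-1) (nuH R d) 4 y d.+1 by rewrite recH; ring.
have eR : AR d r i * Fs (aR d r i.+1) (nuR d r) 1 y d.+1
  = 1 * y * Fs (aR d r i) (nuR d r) 1 y d.+1 + (AR d r i + CR r i) * Fs (aR d r i) (nuR d r) 1 y d.+1
    - CR r i * Fs (aR d r i.-1) (nuR d r) 1 y d.+1 by rewrite recR; ring.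
have -> : AH d r i * Fs (aR d r i.+1) (nuR d r) 1 y d.+1 = 4 * (AR d r i * Fs (aR d r i.+1) (nuR d r) 1 y d.+1).
  by rewrite /AR; field; done.
rewrite eH eR IH1 IH2 /AR /CR; field; done.
Qed.

End Main.


Lemma ext_sum (R : realType) (f : nat -> R) i M : (i < M)%N -> (forall k, (i < k)%N -> f k = 0) ->
  \sum_(k < i.+1) f k = \sum_(k < M) f k.
Proof.
move=> hM hf.
rewrite -(big_mkord xpredT f) -(big_mkord xpredT f) (@big_cat_nat _ _ _ i.+1 0 M _ _ (leq0n i.+1) hM) /=.
rewrite [X in _ = _ + X]big1_seq ?addr0 // => k /andP[_]; rewrite mem_index_iota => /andP[hk _].
exact: hf.
Qed.

Section PA.
Variables (R : realType) (d : nat) (r : R).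
Hypotheses (hr1 : -1 < r) (hr2 : r < 1) (hr0 : r != 0).

Lemma racah_eval i y : (i <= d)%N ->
  (racahPoly (- d%:R - 1) r ((r - d%:R - 1) / 2) (- ((r + d%:R) / 2) - 1) i).[y]
  = Fs (aR d r i) (nuR d r) 1 y d.+1.
Proof.
move=> hi; rewrite /racahPoly horner_sum /Fs.
transitivity (\sum_(k < i.+1) aR d r i k * G (nuR d r) 1 y k).
  apply: eq_bigr => k _; rewrite hornerZ horner_prod; congr (_ * _).
  by apply: eq_bigr => l _; rewrite hornerD hornerN hornerC hornerX /nuR /ga /de mul1r.
apply: (@ext_sum R (fun k => aR d r i k * G (nuR d r) 1 y k) i d.+2); [lia | move=> k hk].
by rewrite /aR rfact_neg_eq0 // !mul0r.
Qed.

Lemma dH_eval i j : (i <= d)%N ->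
  dualHahnF d r (-r) i j = Fs (aH d r i) (nuH R d) 4 ((theta d r (-r) j - d%:R * (d%:R + 1)) / 4) d.+1.
Proof.
move=> hi; rewrite /dualHahnF /Fs.
set yj := (theta d r (-r) j - d%:R * (d%:R + 1)) / 4.
transitivity (\sum_(n < i.+1) aH d r i n * G (nuH R d) 4 yj n).
  apply: eq_bigr => n _.
  rewrite -[X in X / _]mulrA.
  have -> : rfact (- j%:R) n * rfact (j%:R - r - - r - 2 * d%:R - 1) n = G (nuH R d) 4 yj n.
    rewrite /rfact /G -big_split; apply: eq_bigr => k _ /=; rewrite /yj /nuH /theta; by field.
  rewrite /aH opprK -mulrA; ring.
apply: (@ext_sum R (fun n => aH d r i n * G (nuH R d) 4 yj n) i d.+2); [lia | move=> k hk].
by rewrite /aH rfact_neg_eq0 // !mul0r.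
Qed.

Lemma theta_nat j : (j <= d)%N -> theta d r (-r) j = ((d - j) * (d - j).+1)%:R.
Proof. by move=> hj; rewrite /theta natrM -natr1 natrB //; ring. Qed.

Lemma size_lin_prod (c : nat -> R) k : (size (\prod_(l < k) ((c l)%:P - 'X))%R <= k.+1)%N.
Proof.
elim: k => [|k IH]; first by rewrite big_ord0 size_poly1.
rewrite big_ord_recr /=; apply: (leq_trans (size_polyMleq _ _)).
have h2 : (size ((c k)%:P - 'X)%R <= 2)%N.
  apply: (leq_trans (size_polyD _ _)); rewrite size_polyN size_polyX geq_max (leq_trans (size_polyC_leq1 _)) //.
rewrite -subn1 leq_subLR; apply: (leq_trans (leq_add IH h2)); lia.
Qed.

Lemma size_sum_le (F : nat -> {poly R}) m n : (forall k, (k < m)%N -> (size (F k) <= n)%N) ->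
  (size (\sum_(k < m) F k)%R <= n)%N.
Proof.
elim: m => [|m IH] h; first by rewrite big_ord0 size_poly0.
rewrite big_ord_recr /=; apply: (leq_trans (size_polyD _ _)); rewrite geq_max h // andbT.
by apply: IH => k hk; apply: h; apply: ltnW.
Qed.

Lemma partA i (u : {poly R}) : (i <= d)%N -> (size u <= d.+1)%N ->
  (forall j, (j <= d)%N -> u.[theta d r (-r) j] = dualHahnF d r (-r) i j) ->
  u \Po (4%:P * 'X + (d%:R * (d%:R + 1))%:P)
  = racahPoly (- d%:R - 1) r ((r - d%:R - 1) / 2) (- ((r + d%:R) / 2) - 1) i.
Proof.
move=> hi hu hv.
set q := 4%:P * 'X + _.
set P := racahPoly _ _ _ _ i.
apply/eqP; rewrite -subr_eq0; apply/negPn/negP => hp.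
pose yj j := (theta d r (-r) j - d%:R * (d%:R + 1)) / 4.
have hroots : all (root (u \Po q - P)) [seq yj j | j <- iota 0 d.+1].
  apply/allP => y /mapP [j hj ->]; rewrite mem_iota add0n in hj.
  have hjd : (j <= d)%N by lia.
  rewrite /root hornerD hornerN horner_comp.
  have -> : q.[yj j] = theta d r (-r) j.
    by rewrite /q /yj hornerD hornerM hornerC hornerX hornerC; field.
  rewrite hv // dH_eval // FH_FR // -racah_eval // subrr //.
have huniq : uniq [seq yj j | j <- iota 0 d.+1].
  rewrite map_inj_in_uniq ?iota_uniq // => a b ha hb heq.
  rewrite !mem_iota !add0n in ha hb.
  have ha' : (a <= d)%N by lia.
  have hb' : (b <= d)%N by lia.
  have : theta d r (-r) a = theta d r (-r) b.
    by move: heq; rewrite /yj => /(congr1 (fun x => x * 4 + d%:R * (d%:R + 1))); rewrite !divfK ?subrK // pnatr_eq0.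
  rewrite !theta_nat // => /eqP; rewrite eqr_nat => /eqP h.
  nia.
have := max_poly_roots hp hroots huniq.
rewrite size_map size_iota.
have hq : (size q <= 2)%N.
  apply: (leq_trans (size_polyD _ _)); rewrite geq_max (leq_trans (size_polyC_leq1 _)) // andbT.
  by rewrite mul_polyC (leq_trans (size_scale_leq _ _)) // size_polyX.
have h1 : (size (u \Po q) <= d.+1)%N.
  apply: (leq_trans (size_comp_poly_leq _ _)).
  have : ((size q).-1 <= 1)%N by lia.
  have : ((size u).-1 <= d)%N by lia.
  move=> ha hb; rewrite ltnS; apply: (leq_trans (leq_mul ha hb)); lia.
have h2 : (size P <= d.+1)%N.
  rewrite /P /racahPoly.
  apply: (big_ind (fun p : {poly R} => (size p <= d.+1)%N)).
  - by rewrite size_poly0.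
  - by move=> p1 p2 hp1 hp2; apply: (leq_trans (size_polyD _ _)); rewrite geq_max hp1 hp2.
  move=> k _; apply: (leq_trans (size_scale_leq _ _)).
  apply: (leq_trans (size_lin_prod (fun l : nat => l%:R * (l%:R + (r - d%:R - 1) / 2 + (- ((r + d%:R) / 2) - 1) + 1)) k)).
  have := ltn_ord k; lia.
have h3 : (size (u \Po q - P)%R <= d.+1)%N.
  by apply: (leq_trans (size_polyD _ _)); rewrite size_polyN geq_max h1 h2.
by move=> h; have := leq_trans h h3; rewrite ltnn.
Qed.

End PA.


Section PC.
Variables (R : realType) (d : nat) (r : R).
Hypotheses (hr1 : -1 < r) (hr2 : r < 1) (hr0 : r != 0).

Lemma bstar_cf i : (i < d)%N ->
  bstar d r (-r) i = (i%:R - d%:R + r) * (2 * d%:R - i%:R + 1) / (2 * (2 * d%:R - 2 * i%:R + 1)).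
Proof.
move=> hi; have hr1' := hr1; have hr2' := hr2.
have hk := ltn_R R hi; have hi0 := ler0n R i.
rewrite /bstar.
set x := 2 * d%:R - 2 * i%:R + r + - r.
have hx : 0 < x by rewrite /x; lra.
have nzx : x != 0 by rewrite gt_eqF.
have nzx1 : x + 1 != 0 by apply/eqP => ?; lra.
have nzf : rfact x i.+1 != 0 by rewrite gt_eqF // rfact_gt0.
have -> : x + 2 = x + 1 + 1 by ring.
have E : rfact (x + 1 + 1) i = rfact x i.+1 * (x + (i.+1)%:R) / (x * (x + 1)).
  have h1 : rfact x i.+2 = x * ((x + 1) * rfact (x + 1 + 1) i) by rewrite !rfactSl.
  have h2 : rfact x i.+2 = rfact x i.+1 * (x + (i.+1)%:R) by rewrite rfactS.
  apply: (mulfI (mulf_neq0 nzx nzx1)); rewrite -[LHS]mulrA -h1 h2; field.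
  by rewrite nzx nzx1.
rewrite E.
move: nzf; set X := rfact x i.+1 => nzf.
rewrite /x -!natr1.
field.
repeat (apply/andP; split); try (by []); apply/eqP => ?; lra.
Qed.

Lemma cstar_cf i : (i < d)%N ->
  cstar d r (-r) i.+1 = (i.+1)%:R * ((i.+1)%:R - d%:R - r - 1) / (2 * (2 * d%:R - 2 * (i.+1)%:R + 1)).
Proof.
move=> hi; have hr1' := hr1; have hr2' := hr2.
have hk := ltn_R R hi; have hi0 := ler0n R i.
rewrite /cstar.
set n := (d - i.+1)%N.
have hn : n%:R = d%:R - (i.+1)%:R :> R by rewrite /n natrB.
set y := d%:R - (i.+1)%:R + r + - r + 1.
have hy : y = n%:R + 1 by rewrite /y hn; ring.
have hy0 : 0 < y by rewrite hy; have := ler0n R n; lra.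
have -> : d%:R - (i.+1)%:R + r + - r + 2 = y + 1 by rewrite /y; ring.
have nzZ : rfact (y + 1) n != 0 by rewrite gt_eqF // rfact_gt0 //; lra.
have hn0 := ler0n R n.
have nzyn : y + n%:R != 0 by apply/eqP => ?; lra.
have E : rfact y n = y * rfact (y + 1) n / (y + n%:R).
  apply: (mulIf nzyn); rewrite -rfactS rfactSl; field; exact: nzyn.
rewrite E rfactS.
move: nzZ; set Z := rfact (y + 1) n => nzZ.
rewrite hy -!natr1.
rewrite hy in nzyn.
have : n%:R = d%:R - i%:R - 1 :> R by rewrite hn -natr1; ring.
move=> hn'; rewrite hn'.
rewrite hn' in nzyn.
field.
repeat (apply/andP; split); try (by []); apply/eqP => ?; lra.
Qed.

Definition rho i := bstar d r (-r) i / cstar d r (-r) i.+1.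
Definition rhob j := bbar d r j / cbar d r j.+1.

Lemma rho_cf i : (i.+1 <= d)%N -> rho i =
  ((i%:R - d%:R + r) * (2 * d%:R - i%:R + 1) / (2 * (2 * d%:R - 2 * i%:R + 1)))
  / ((i.+1)%:R * ((i.+1)%:R - d%:R - r - 1) / (2 * (2 * d%:R - 2 * (i.+1)%:R + 1))).
Proof. by move=> hi; rewrite /rho bstar_cf // cstar_cf. Qed.

Ltac nz2 := repeat (apply/andP; split); try (by []);
  try (match goal with H : is_true (_ != 0) |- _ => exact H end); apply/eqP => HH;
  first [ lra | match goal with H : is_true (_ != 0) |- _ => move/eqP: H; apply; lra end ].

Lemma caseA j : (2 * j + 2 <= d)%N -> rhob j = rho (2 * j) * rho (2 * j).+1.
Proof.
move=> hj; have hr1' := hr1; have hr2' := hr2.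
rewrite !rho_cf; [|lia|lia].
have [e he] : exists e, d = (2 * j + 2 + e)%N by exists (d - (2 * j + 2))%N; lia.
rewrite /rhob /bbar /cbar he.
have := ler0n R j; have := ler0n R e => h1 h2.
rewrite -?natr1 ?natrD ?natrM -?natr1.
field.
nz2.
Qed.

Lemma caseB1 j : d = (2 * j + 1)%N -> rhob j = rho (2 * j).
Proof.
move=> hd; have hr1' := hr1; have hr2' := hr2.
rewrite !rho_cf; [|lia].
rewrite /rhob /bbar /cbar hd; clear hd.
have := ler0n R j => h1.
rewrite -?natr1 ?natrD ?natrM -?natr1.
field.
nz2.
Qed.

Lemma caseB2 j : d = (2 * j + 2)%N -> rho (2 * j).+1 * rhob j.+1 = 1.
Proof.
move=> hd; have hr1' := hr1; have hr2' := hr2.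
rewrite !rho_cf; [|lia].
rewrite /rhob /bbar /cbar hd; clear hd.
have := ler0n R j => h1.
rewrite -?natr1 ?natrD ?natrM -?natr1.
field.
nz2.
Qed.

Lemma caseC j : (d < 2 * j)%N -> (j < d)%N ->
  rho (2 * (d - j.+1) + 1) * rho (2 * (d - j.+1) + 1).+1 * rhob j = 1.
Proof.
move=> h1 h2; have hr1' := hr1; have hr2' := hr2.
rewrite !rho_cf; [|lia|lia].
have [e [f [hd hj]]] : exists e f, d = (2 * e + 3 + f)%N /\ j = (e + 2 + f)%N.
  by exists (d - j.+1)%N, (j - (d - j.+1) - 2)%N; lia.
have -> : (d - j.+1)%N = e by lia.
rewrite /rhob /bbar /cbar hd hj; clear hd hj h1 h2.
have := ler0n R e; have := ler0n R f => ? ?.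
rewrite -?natr1 ?natrD ?natrM -?natr1.
field.
nz2.
Qed.

Lemma kstarS i : kstar d r (-r) i.+1 = kstar d r (-r) i * rho i.
Proof. by rewrite /kstar /rho !big_ord_recr /= invfM; ring. Qed.

Lemma kbarS j : kbar d r j.+1 = kbar d r j * rhob j.
Proof. by rewrite /kbar /rhob !big_ord_recr /= invfM; ring. Qed.

Lemma partC j : (j <= d)%N ->
  kbar d r j = (if (j <= d./2)%N then kstar d r (-r) (2 * j) else kstar d r (-r) (2 * (d - j) + 1)).
Proof.
elim: j => [|j IH] hj.
  by rewrite leq0n /kbar /kstar !big_ord0.
rewrite kbarS IH; last by lia.
case: (leqP j.+1 d./2) => hA.
  have -> : (j <= d./2)%N by lia.
  have -> : (2 * j.+1 = (2 * j).+2)%N by lia.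
  by rewrite !kstarS caseA -?mulrA //; lia.
case: (leqP j d./2) => hB.
  case: (ltnP (2 * j) d) => hd.
    have hd' : d = (2 * j + 1)%N by lia.
    have -> : (2 * (d - j.+1) + 1 = (2 * j).+1)%N by lia.
    by rewrite kstarS caseB1.
  case: j IH hj hA hB hd => [|j'] IH hj hA hB hd; first by lia.
  have hd' : d = (2 * j' + 2)%N by lia.
  have -> : (2 * (d - j'.+2) + 1 = (2 * j').+1)%N by lia.
  have -> : (2 * j'.+1 = (2 * j').+2)%N by lia.
  by rewrite kstarS -mulrA caseB2 // mulr1.
have -> : (2 * (d - j) + 1 = (2 * (d - j.+1) + 1).+2)%N by lia.
rewrite !kstarS; set K := kstar _ _ _ _; set r1 := rho _; set r2 := rho _; set r3 := rhob _.
have hc := @caseC j ltac:(lia) hj; rewrite -/r1 -/r2 -/r3 in hc.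
clearbody K r1 r2 r3; by rewrite -[RHS]mulr1 -hc; ring.
Qed.

End PC.

Unset Implicit Arguments.

Theorem theorem1p4 (R : realType) (d : nat) (r s : R) :
  -1 < r -> -1 < s -> r != 0 -> r + s = 0 ->
  let alpha := - d%:R - 1 in
  let beta := r in
  let gamma := (r - d%:R - 1) / 2 in
  let delta := - ((r + d%:R) / 2) - 1 in
  let thetabar (j : nat) := 4 * j%:R * (j%:R + gamma + delta + 1) + d%:R * (d%:R + 1) in
  [/\ (* (a) u_i(4y + d(d+1)) = R_i(y), where u_i is the (unique) polynomial of
         degree <= d interpolating the dual Hahn values *)
      forall i, (i <= d)%N ->
        forall u : {poly R}, (size u <= d.+1)%N ->
          (forall j, (j <= d)%N -> u.[theta d r s j] = dualHahnF d r s i j) ->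
          u \Po (4%:P * 'X + (d%:R * (d%:R + 1))%:P) = racahPoly alpha beta gamma delta i,
      (* (b) *)
      forall j, (j <= d)%N ->
        thetabar j = (d%:R - 2 * j%:R) * (d%:R - 2 * j%:R + 1) /\
        thetabar j = (if (j <= d./2)%N then theta d r s (2 * j)
                      else theta d r s (2 * (d - j) + 1)),
      (forall i, (i <= d)%N -> exists2 j, (j <= d)%N & thetabar j = theta d r s i) /\
      (forall j, (j <= d)%N -> exists2 i, (i <= d)%N & thetabar j = theta d r s i) &
      (* (c) *)
      forall j, (j <= d)%N ->
        kbar d r j = (if (j <= d./2)%N then kstar d r s (2 * j)
                      else kstar d r s (2 * (d - j) + 1))].
Proof.
move=> hr1 hs1 hr0 hrs alpha beta gamma delta thetabar.
have hs : s = - r by lra.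
subst s.
have hr2 : r < 1 by lra.
have thb : forall j, thetabar j = (d%:R - 2 * j%:R) * (d%:R - 2 * j%:R + 1).
  by move=> j; rewrite /thetabar /gamma /delta; field.
have hB : forall j, (j <= d)%N ->
    thetabar j = (if (j <= d./2)%N then theta d r (-r) (2 * j)
                  else theta d r (-r) (2 * (d - j) + 1)).
  move=> j hj; rewrite thb; case: ifP => _; rewrite /theta.
    by rewrite natrM; ring.
  by rewrite natrD natrM natrB //; ring.
split.
- move=> i hi u hu hv; exact: (partA hr1 hr2 hr0 hi hu hv).
- by move=> j hj; split; [exact: thb | exact: hB].
- split.
    move=> i hi.
    have hodd := odd_double_half i.
    case: (boolP (odd i)) hodd => ho hodd.
      exists (d - i./2)%N; first by lia.
      rewrite thb /theta natrB; last by lia.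
      have e : (i = 1 + (i./2).*2)%N by rewrite -[in LHS]hodd.
      have -> : i%:R = 2 * (i./2)%:R + 1 :> R by rewrite {1}e natrD -muln2 natrM; ring.
      ring.
    exists i./2; first by lia.
    rewrite thb /theta.
    have e : (i = (i./2).*2)%N by rewrite -[in LHS]hodd.
    have -> : i%:R = 2 * (i./2)%:R :> R by rewrite {1}e -muln2 natrM; ring.
    ring.
  move=> j hj; exists (if (j <= d./2)%N then (2 * j)%N else (2 * (d - j) + 1)%N).
    by case: ifP => h; lia.
  by rewrite (hB j hj); case: ifP.
- move=> j hj; exact: (partC hr1 hr2 hr0 hj).
Qed.
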